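(* Let $(\mathcal{E},\mathcal{L},\mathcal{B})$ be a weakly left resolving labelled space with associated inverse semigroup $S$, let $\xi$ be a filter in $E(S)$ of finite type with word $\alpha\in\mathcal{L}^*$, and for $0\le n\le|\alpha|$ let $\mathcal{F}_n=\{A\in\mathcal{B}:(\alpha_{1,n},A,\alpha_{1,n})\in\xi\}$. Then (i) $\mathcal{F}_n$ is a filter in $\mathcal{B}_{\alpha_{1,n}}$ for every $1\le n\le|\alpha|$, and $\mathcal{F}_0$ is either empty or a filter in $\mathcal{B}$; (ii) $\mathcal{F}_n=\{A\in\mathcal{B}_{\alpha_{1,n}}: r(A,\alpha_{n+1,m})\in\mathcal{F}_m\}$ for all $0\le n<m\le|\alpha|$.
   Context: A directed graph $\mathcal{E}=(\mathcal{E}^0,\mathcal{E}^1,r,s)$ has countable nonempty vertex set, edge set, range/source maps; paths satisfy $r(\lambda_i)=s(\lambda_{i+1})$. A labelled graph has a surjective labelling $\mathcal{L}:\mathcal{E}^1\to\mathcal{A}$ extended letterwise to paths. $\omega$ is the empty word, $\mathcal{L}^+=\bigcup_{n\ge1}\mathcal{L}(\mathcal{E}^n)$, $\mathcal{L}^*=\{\omega\}\cup\mathcal{L}^+$; $\alpha_{i,j}=\alpha_i\cdots\alpha_j$, $\alpha_{1,0}=\omega$. For $A\subseteq\mathcal{E}^0$, $\alpha\in\mathcal{L}^+$: $r(A,\alpha)=\{r(\lambda):\mathcal{L}(\lambda)=\alpha,\ s(\lambda)\in A\}$, $r(A,\omega)=A$, $r(\alpha)=r(\mathcal{E}^0,\alpha)$.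 $\mathcal{B}$ accommodating: closed under $r(\cdot,\alpha)$, finite intersections and unions, contains $r(\alpha)$ for $\alpha\in\mathcal{L}^+$; labelled space weakly left resolving if $r(A\cap B,\alpha)=r(A,\alpha)\cap r(B,\alpha)$ for $A,B\in\mathcal{B}$, $\alpha\in\mathcal{L}^+$. $\mathcal{B}_\alpha=\mathcal{B}\cap\mathcal{P}(r(\alpha))$. $S$ = triples $(\alpha,A,\beta)$, $\alpha,\beta\in\mathcal{L}^*$, $\emptyset\ne A\in\mathcal{B}_\alpha\cap\mathcal{B}_\beta$, plus $0$; product $(\alpha,A,\beta)(\gamma,B,\delta)=(\alpha\gamma',r(A,\gamma')\cap B,\delta)$ if $\gamma=\beta\gamma'$, $=(\alpha,A\cap r(B,\beta'),\delta\beta')$ if $\beta=\gamma\beta'$, $=0$ otherwise (empty middle entry identified with $0$). $E(S)=\{(\alpha,A,\alpha)\}\cup\{0\}$, $p\le q$ iff $pq=p$; $(\alpha,A,\alpha)\le(\beta,B,\beta)$ iff $\alpha=\beta\alpha'$ and $A\subseteq r(B,\alpha')$. A filter in a poset with least element $0$ is a nonempty upward-closed subset not containing $0$ in which any two elements have a common lower bound in it; filters in $\mathcal{B}_\alpha$ are under inclusion. The words of any two elements of a filter in $E(S)$ are comparable; a filter $\xi$ is of finite type if among the words $\beta$ with $(\beta,B,\beta)\in\xi$ there is one of largest length, called the word of $\xi$. *)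

(* Defs.v *)
(* Sets of vertices are predicates V -> Prop; set equality is
   extensional (pointwise iff). *)
From Stdlib Require Import List Arith.
Import ListNotations.

Section LabelledSpaces.
Variables (V Ed Alph : Type) (src rg : Ed -> V) (lab : Ed -> Alph).

Fixpoint is_path (l : list Ed) : Prop :=
  match l with
  | [] => True
  | e :: l' => match l' with
               | [] => True
               | e' :: _ => rg e = src e' /\ is_path l'
               end
  end.

Definition Lplus (w : list Alph) : Prop :=
  exists l, l <> [] /\ is_path l /\ map lab l = w.
Definition Lstar (w : list Alph) : Prop := w = [] \/ Lplus w.

Definition subset (A C : V -> Prop) : Prop := forall v, A v -> C v.
Definition inter (A C : V -> Prop) : V -> Prop := fun v => A v /\ C v.
Definition union (A C : V -> Prop) : V -> Prop := fun v => A v \/ C v.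
Definition fullset : V -> Prop := fun _ => True.
Definition nonemptyset (A : V -> Prop) : Prop := exists v, A v.

Definition rset (A : V -> Prop) (w : list Alph) : V -> Prop :=
  match w with
  | [] => A
  | _ :: _ => fun v => exists e l, is_path (e :: l) /\ map lab (e :: l) = w /\
                          A (src e) /\ rg (last (e :: l) e) = v
  end.

Definition rword (w : list Alph) : V -> Prop := rset fullset w.

Definition accommodating (B : (V -> Prop) -> Prop) : Prop :=
  (forall A w, B A -> Lplus w -> B (rset A w)) /\
  (forall A C, B A -> B C -> B (inter A C)) /\
  (forall A C, B A -> B C -> B (union A C)) /\
  (forall w, Lplus w -> B (rword w)).

Definition weakly_left_resolving (B : (V -> Prop) -> Prop) : Prop :=
  forall A C w, B A -> B C -> Lplus w ->
    forall v, rset (inter A C) w v <-> (rset A w v /\ rset C w v).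

Definition B_alpha (B : (V -> Prop) -> Prop) (w : list Alph) (A : V -> Prop) : Prop :=
  B A /\ subset A (rword w).

(* filter in the poset (B_alpha, ⊆) with least element the empty set *)
Definition filter_in (B : (V -> Prop) -> Prop) (w : list Alph) (F : (V -> Prop) -> Prop) : Prop :=
  (exists A, F A) /\
  (forall A, F A -> B_alpha B w A) /\
  (forall A, F A -> nonemptyset A) /\
  (forall A C, F A -> B_alpha B w C -> subset A C -> F C) /\
  (forall A C, F A -> F C -> exists D, F D /\ subset D A /\ subset D C).

(* nonzero idempotents (alpha, A, alpha) of S, encoded as pairs (alpha, A) *)
Definition idem (B : (V -> Prop) -> Prop) (w : list Alph) (A : V -> Prop) : Prop :=
  Lstar w /\ nonemptyset A /\ B_alpha B w A.

Definition idem_le (a : list Alph) (A : V -> Prop) (b : list Alph) (C : V -> Prop) : Prop :=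
  exists a', a = b ++ a' /\ subset A (rset C a').

(* a filter xi in E(S); since 0 ∉ xi, xi is a set of nonzero idempotents *)
Definition filter_ES (B : (V -> Prop) -> Prop) (xi : list Alph -> (V -> Prop) -> Prop) : Prop :=
  (exists a A, xi a A) /\
  (forall a A, xi a A -> idem B a A) /\
  (forall a A b C, xi a A -> idem B b C -> idem_le a A b C -> xi b C) /\
  (forall a A b C, xi a A -> xi b C ->
     exists d D, xi d D /\ idem_le d D a A /\ idem_le d D b C).

Definition finite_type_with_word (xi : list Alph -> (V -> Prop) -> Prop) (alpha : list Alph) : Prop :=
  (exists A, xi alpha A) /\ (forall b C, xi b C -> length b <= length alpha).

(* alpha_{i,j} = alpha_i ... alpha_j (1-based), alpha_{1,0} = omega *)
Definition subword (alpha : list Alph) (i j : nat) : list Alph :=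
  firstn (j - (i - 1)) (skipn (i - 1) alpha).

Definition Fn (B : (V -> Prop) -> Prop) (xi : list Alph -> (V -> Prop) -> Prop)
  (alpha : list Alph) (n : nat) (A : V -> Prop) : Prop :=
  B A /\ xi (subword alpha 1 n) A.

End LabelledSpaces.

Definition countable (T : Type) : Prop := exists f : T -> nat, forall x y, f x = f y -> x = y.
Definition surjective {X Y : Type} (f : X -> Y) : Prop := forall y, exists x, f x = y.

Arguments is_path {V Ed} src rg l.
Arguments Lplus {V Ed Alph} src rg lab w.
Arguments Lstar {V Ed Alph} src rg lab w.
Arguments subset {V} A C.
Arguments inter {V} A C.
Arguments union {V} A C.
Arguments fullset {V}.
Arguments nonemptyset {V} A.
Arguments rset {V Ed Alph} src rg lab A w.
Arguments rword {V Ed Alph} src rg lab w.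
Arguments accommodating {V Ed Alph} src rg lab B.
Arguments weakly_left_resolving {V Ed Alph} src rg lab B.
Arguments B_alpha {V Ed Alph} src rg lab B w A.
Arguments filter_in {V Ed Alph} src rg lab B w F.
Arguments idem {V Ed Alph} src rg lab B w A.
Arguments idem_le {V Ed Alph} src rg lab a A b C.
Arguments filter_ES {V Ed Alph} src rg lab B xi.
Arguments finite_type_with_word {V Alph} xi alpha.
Arguments subword {Alph} alpha i j.
Arguments Fn {V Alph} B xi alpha n A.

(* Main.v *)
Require Import Defs.
From Stdlib Require Import List Arith Lia Classical.
Import ListNotations.

Section Aux.
Variables (V Ed Alph : Type) (src rg : Ed -> V) (lab : Ed -> Alph).

Fixpoint RR (A : V -> Prop) (w : list Alph) : V -> Prop :=
  match w with
  | [] => A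
  | a :: w' => fun v => exists e, lab e = a /\ A (src e) /\ RR (fun x => x = rg e) w' v
  end.

Lemma RR_mono : forall w A C, (forall v, A v -> C v) -> forall v, RR A w v -> RR C w v.
Proof.
  induction w; simpl; intros A C H v Hv; [auto|].
  destruct Hv as [e [H1 [H2 H3]]]; exists e; auto.
Qed.

Lemma RR_ne : forall y A v, RR A y v -> exists z, A z.
Proof. destruct y; simpl; intros A v H; [eauto|]. destruct H as [e [_ [H _]]]; eauto. Qed.

Lemma RR_app1 : forall x A y v, RR A (x ++ y) v -> RR (RR A x) y v.
Proof.
  induction x; simpl; intros A y v H; [exact H|].
  destruct H as [e [He [HA HR]]]. apply IHx in HR.
  eapply RR_mono; [|exact HR]. intros z Hz. exists e; auto.
Qed.

Lemma RR_ex : forall y (I : Type) (P : I -> V -> Prop) v,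
  RR (fun z => exists i, P i z) y v -> exists i, RR (P i) y v.
Proof.
  destruct y; simpl; intros I P v H; [exact H|].
  destruct H as [e [He [[i Hi] HR]]]. exists i, e; auto.
Qed.

Lemma RR_app2 : forall x A y v, RR (RR A x) y v -> RR A (x ++ y) v.
Proof.
  induction x; simpl; intros A y v H; [exact H|].
  apply (RR_ex y Ed (fun e z => lab e = a /\ A (src e) /\ RR (fun x0 => x0 = rg e) x z)) in H.
  destruct H as [e H].
  destruct (RR_ne _ _ _ H) as [z [H1 [H2 _]]].
  exists e. split; [auto|split;[auto|]].
  apply IHx. eapply RR_mono; [|exact H]. intros w [_ [_ Hw]]; exact Hw.
Qed.

Lemma last_default : forall (l : list Ed) x d d', last (x :: l) d = last (x :: l) d'.
Proof.
  induction l; intros x d d'; [reflexivity|].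
  change (last (a :: l) d = last (a :: l) d'). apply IHl.
Qed.

Lemma path_RR : forall w e v,
  (exists l, is_path src rg (e :: l) /\ map lab l = w /\ rg (last (e :: l) e) = v)
  <-> RR (fun x => x = rg e) w v.
Proof.
  induction w; intros e v; split.
  - intros [l [_ [Hm Hl]]]. destruct l; [|discriminate]. simpl in *. auto.
  - simpl; intros H. exists []. simpl. auto.
  - intros [l [Hp [Hm Hl]]]. destruct l as [|e' l']; [discriminate|].
    simpl in Hm. injection Hm as Ha Hm'. destruct Hp as [Hr Hp].
    exists e'. split; [auto|split;[auto|]].
    apply IHw. exists l'. split; [auto|split;[auto|]].
    change (rg (last (e' :: l') e) = v) in Hl. rewrite <- Hl.
    f_equal. apply last_default.
  - intros [e' [Ha [Hs HR]]]. apply IHw in HR. destruct HR as [l' [Hp [Hm Hl]]].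
    exists (e' :: l'). split; [simpl; auto|split].
    + simpl; congruence.
    + change (rg (last (e' :: l') e) = v). rewrite <- Hl. f_equal. apply last_default.
Qed.

Lemma rset_RR : forall A w v, rset src rg lab A w v <-> RR A w v.
Proof.
  intros A w v; destruct w as [|a w]; simpl; [tauto|]. split.
  - intros [e [l [Hp [Hm [HA Hl]]]]]. simpl in Hm. injection Hm as Ha Hm.
    exists e. split; [auto|split;[auto|]]. apply path_RR. eauto.
  - intros [e [Ha [HA HR]]]. apply path_RR in HR. destruct HR as [l [Hp [Hm Hl]]].
    exists e, l. repeat split; auto. simpl; congruence.
Qed.

Lemma Lplus_RR : forall w, Lplus src rg lab w <-> w <> [] /\ exists v, RR fullset w v.
Proof.
  intros w; split.
  - intros [l [Hne [Hp Hm]]]. destruct l as [|e l]; [congruence|].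
    subst w. split; [discriminate|].
    exists (rg (last (e :: l) e)). apply rset_RR. simpl.
    exists e, l. repeat split; auto.
  - intros [Hne [v Hv]]. destruct w as [|a w]; [congruence|].
    apply rset_RR in Hv. destruct Hv as [e [l [Hp [Hm _]]]].
    exists (e :: l). repeat split; auto. discriminate.
Qed.

Lemma Lstar_prefix : forall x y, Lstar src rg lab (x ++ y) -> Lstar src rg lab x.
Proof.
  intros x y [H|H].
  - left. destruct x; [auto|discriminate].
  - destruct x as [|a x]; [left; auto|right].
    apply Lplus_RR in H. destruct H as [_ [v Hv]].
    apply RR_app1 in Hv. apply RR_ne in Hv. apply Lplus_RR. split; [discriminate|auto].
Qed.

Lemma Lplus_suffix : forall x y, Lstar src rg lab (x ++ y) -> y <> [] -> Lplus src rg lab y.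
Proof.
  intros x y [H|H] Hy.
  - destruct x, y; try discriminate; congruence.
  - apply Lplus_RR in H. destruct H as [_ [v Hv]].
    apply RR_app1 in Hv. apply Lplus_RR. split; [auto|].
    exists v. eapply RR_mono; [|exact Hv]. intros; exact I.
Qed.

End Aux.

Lemma sub1 : forall (Alph : Type) (alpha : list Alph) n, subword alpha 1 n = firstn n alpha.
Proof. intros. unfold subword. simpl. rewrite Nat.sub_0_r. reflexivity. Qed.

Lemma subS : forall (Alph : Type) (alpha : list Alph) n m,
  subword alpha (n + 1) m = firstn (m - n) (skipn n alpha).
Proof. intros. unfold subword. rewrite Nat.add_sub. reflexivity. Qed.

Lemma firstn_split : forall (Alph : Type) (alpha : list Alph) n m, n <= m -> n <= length alpha ->
  firstn m alpha = firstn n alpha ++ firstn (m - n) (skipn n alpha).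
Proof.
  intros Alph alpha n m Hnm Hn.
  rewrite <- (firstn_skipn n alpha) at 1.
  rewrite firstn_app. rewrite firstn_length_le by auto.
  rewrite firstn_all2; [reflexivity|]. rewrite firstn_length_le; auto.
Qed.

Theorem mainTheorem11
  (V Ed Alph : Type) (src rg : Ed -> V) (lab : Ed -> Alph)
  (B : (V -> Prop) -> Prop)
  (xi : list Alph -> (V -> Prop) -> Prop) (alpha : list Alph) :
  inhabited V -> countable V -> countable Ed -> surjective lab ->
  accommodating src rg lab B ->
  weakly_left_resolving src rg lab B ->
  filter_ES src rg lab B xi ->
  finite_type_with_word xi alpha ->
  ((forall n, 1 <= n <= length alpha ->
      filter_in src rg lab B (subword alpha 1 n) (Fn B xi alpha n)) /\
   ((forall A, ~ Fn B xi alpha 0 A) \/ filter_in src rg lab B [] (Fn B xi alpha 0))) /\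
  (forall n m, n < m <= length alpha ->
     forall A, Fn B xi alpha n A <->
       (B_alpha src rg lab B (subword alpha 1 n) A /\
        Fn B xi alpha m (rset src rg lab A (subword alpha (n + 1) m)))).
Proof.
  intros _ _ _ _ [Hacc1 [Hacc2 [Hacc3 Hacc4]]] Hwlr [HFne [HFidem [HFup HFdir]]] [[A0 HA0] _].
  assert (HLa : Lstar src rg lab alpha) by (apply (HFidem _ _ HA0)).
  assert (HLw : forall n, Lstar src rg lab (firstn n alpha)).
  { intros n. apply (Lstar_prefix _ _ _ src rg lab _ (skipn n alpha)). rewrite firstn_skipn. auto. }
  assert (Hgen : forall n, filter_in src rg lab B (firstn n alpha) (Fn B xi alpha n) <->
                   exists A, Fn B xi alpha n A).
  { intros n. split; [intros [H _]; exact H|]. intros Hex.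
    unfold Fn; rewrite sub1. split; [unfold Fn in Hex; rewrite sub1 in Hex; exact Hex|]. split; [|split; [|split]].
    - intros A [_ HA]. apply (HFidem _ _ HA).
    - intros A [_ HA]. apply (HFidem _ _ HA).
    - intros A C [_ HA] HC Hsub. split; [apply HC|].
      apply (HFup _ _ _ _ HA).
      + split; [auto|split;[|auto]].
        destruct (HFidem _ _ HA) as [_ [[z Hz] _]]. exists z; auto.
      + exists []. rewrite app_nil_r. split; auto.
    - intros A C [HBA HA] [HBC HC].
      destruct (HFdir _ _ _ _ HA HC) as [d [D [HD [[d1 [Hd1 Hs1]] [d2 [Hd2 Hs2]]]]]].
      rewrite Hd1 in Hd2. apply app_inv_head in Hd2. subst d2.
      destruct (HFidem _ _ HD) as [HLd [[z Hz] _]].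
      destruct (HFidem _ _ HA) as [_ [_ [_ HAs]]].
      assert (Hsub : forall v, D v -> rset src rg lab (inter A C) d1 v).
      { destruct d1 as [|b d1].
        - intros v Hv. split; [apply Hs1|apply Hs2]; exact Hv.
        - assert (HLp : Lplus src rg lab (b :: d1)).
          { apply (Lplus_suffix _ _ _ src rg lab (firstn n alpha)); [rewrite <- Hd1; auto|discriminate]. }
          intros v Hv. apply Hwlr; auto. }
      assert (Hint : exists y, inter A C y).
      { pose proof (Hsub z Hz) as Hr. apply rset_RR in Hr. apply RR_ne in Hr. exact Hr. }
      exists (inter A C). split; [|split; intros v [H1 H2]; auto].
      split; [apply Hacc2; auto|].
      apply (HFup _ _ _ _ HD).
      + split; [auto|split;[auto|split]]. apply Hacc2; auto.
        intros v [H1 _]; auto.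
      + exists d1. split; [exact Hd1|exact Hsub]. }
  split; [split|].
  - intros n Hn. rewrite sub1. apply Hgen.
    set (w := firstn n alpha).
    assert (Hwne : w <> []).
    { intros Hw. assert (length w = n) by (apply firstn_length_le; lia). rewrite Hw in H; simpl in H; lia. }
    assert (HLp : Lplus src rg lab w).
    { destruct (HLw n) as [H|H]; [contradiction|exact H]. }
    exists (rword src rg lab w). unfold Fn; rewrite sub1. split; [apply Hacc4; auto|].
    destruct (HFidem _ _ HA0) as [_ [[z Hz] [_ HAs]]].
    assert (Hsub : forall v, A0 v -> rset src rg lab (rword src rg lab w) (skipn n alpha) v).
    { intros v Hv. apply HAs in Hv. unfold rword in Hv. apply rset_RR in Hv.
      rewrite <- (firstn_skipn n alpha) in Hv. apply RR_app1 in Hv.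
      apply rset_RR. eapply RR_mono; [|exact Hv]. intros u Hu. apply rset_RR. exact Hu. }
    apply (HFup _ _ _ _ HA0).
    + split; [apply HLw|split].
      * pose proof (Hsub z Hz) as H. apply rset_RR in H. apply RR_ne in H. exact H.
      * split; [apply Hacc4; auto|intros v Hv; auto].
    + exists (skipn n alpha). split; [symmetry; apply firstn_skipn|exact Hsub].
  - destruct (classic (exists A, Fn B xi alpha 0 A)) as [H|H].
    + right. apply Hgen in H. exact H.
    + left. intros A HA. apply H. eauto.
  - intros n m Hnm A. unfold Fn. rewrite !sub1, subS.
    rewrite (firstn_split _ alpha n m) by lia.
    set (w := firstn n alpha). set (u := firstn (m - n) (skipn n alpha)).
    assert (Hune : u <> []).
    { intros Hu. assert (length u = m - n) by (apply firstn_length_le; rewrite length_skipn; lia).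
      rewrite Hu in H; simpl in H; lia. }
    assert (Hal : alpha = (w ++ u) ++ skipn m alpha).
    { unfold w, u. rewrite <- firstn_split by lia. symmetry; apply firstn_skipn. }
    assert (HLwu : Lstar src rg lab (w ++ u)).
    { apply (Lstar_prefix _ _ _ src rg lab _ (skipn m alpha)). rewrite <- Hal; auto. }
    assert (HLu : Lplus src rg lab u) by (apply (Lplus_suffix _ _ _ src rg lab w); auto).
    split.
    + intros [HBA HA]. destruct (HFidem _ _ HA) as [_ [_ HBa]]. split; [exact HBa|].
      split; [apply Hacc1; auto|].
      destruct (HFdir _ _ _ _ HA0 HA) as [d [D [HD [[d1 [Hd1 Hs1]] [d2 [Hd2 Hs2]]]]]].
      rewrite Hd2, Hal in Hd1. rewrite <- !app_assoc in Hd1. apply app_inv_head in Hd1.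
      subst d2. destruct (HFidem _ _ HD) as [_ [[z Hz] _]].
      assert (Hsub : forall v, D v ->
                 rset src rg lab (rset src rg lab A u) (skipn m alpha ++ d1) v).
      { intros v Hv. apply Hs2 in Hv. apply rset_RR in Hv. apply RR_app1 in Hv.
        apply rset_RR. eapply RR_mono; [|exact Hv]. intros y Hy; apply rset_RR; exact Hy. }
      apply (HFup _ _ _ _ HD).
      * split; [auto|split; [|split; [apply Hacc1; auto|]]].
        -- pose proof (Hsub z Hz) as H. apply rset_RR in H. apply RR_ne in H. exact H.
        -- intros v Hv. destruct HBa as [_ HAw]. apply rset_RR in Hv.
           unfold rword. apply rset_RR. apply RR_app2.
           eapply RR_mono; [|exact Hv]. intros y Hy. apply HAw in Hy. apply rset_RR in Hy. exact Hy.
      * exists (skipn m alpha ++ d1). split; [rewrite Hd2, <- !app_assoc; reflexivity|exact Hsub].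
    + intros [[HBA HAw] [HBr Hr]]. split; [exact HBA|].
      apply (HFup _ _ _ _ Hr).
      * split; [apply HLw|split; [|split; auto]].
        destruct (HFidem _ _ Hr) as [_ [[z Hz] _]]. apply rset_RR in Hz. apply RR_ne in Hz. exact Hz.
      * exists u. split; [reflexivity|intros v Hv; exact Hv].
Qed.
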